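(* Let $\mathcal B$ be a bimachine realizing a transduction $f$. Then $\mathit{Left}_f(\mathit{Right}_f(\mathcal B))$ and $\mathit{Right}_f(\mathit{Left}_f(\mathcal B))$ are minimal bimachines realizing $f$, and moreover $\mathcal B\sqsubseteq\mathit{Left}_f(\mathit{Right}_f(\mathcal B))$ and $\mathcal B\sqsubseteq\mathit{Right}_f(\mathit{Left}_f(\mathcal B))$.
   Context: Notation: $u^{-1}v$ is the word $v'$ with $uv'=v$; $\bigwedge L$ is the longest common prefix of $L$ ($\bigwedge\emptyset=\varepsilon$). Transductions are partial functions $f:\Sigma^*\to\Sigma^*$. A left automaton is a complete deterministic automaton $\mathcal L$ with initial $l_0$; $[u]_{\mathcal L}$ is the state reached on $u$; $u\sim_{\mathcal L}v$ iff $[u]_{\mathcal L}=[v]_{\mathcal L}$. A right automaton $\mathcal R$ with initial state $r_0$ is backward deterministic and backward complete and reads words from right to left: $[u]_{\mathcal R}$ is the unique $p$ with a run on $u$ from $p$ to $r_0$, $u$ accepted iff $[u]_{\mathcal R}$ final, $u\sim_{\mathcal R}v$ iff $[u]_{\mathcal R}=[v]_{\mathcal R}$. For automata of the same kind, $\mathcal A_1\sqsubseteq\mathcal A_2$ means ${\sim_{\mathcal A_1}}\subseteq{\sim_{\mathcal A_2}}$. A bimachine $\mathcal B=(\mathcal L,\mathcal R,\omega,\lambda,\rho)$: left automaton $\mathcal L$ and right automaton $\mathcal R$ accepting the same language, $\omega:Q_{\mathcal L}\times\Sigma\times Q_{\mathcal R}\to\Sigma^*$, $\lambda$ on final states of $\mathcal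 R$, $\rho$ on final states of $\mathcal L$; it realizes $u=\sigma_1\cdots\sigma_n\mapsto \lambda([u]_{\mathcal R})\prod_{k=1}^n\omega([\sigma_1\cdots\sigma_{k-1}]_{\mathcal L},\sigma_k,[\sigma_{k+1}\cdots\sigma_n]_{\mathcal R})\,\rho([u]_{\mathcal L})$ on the accepted language. $\mathcal B_1\sqsubseteq\mathcal B_2$ iff $\mathcal L_1\sqsubseteq\mathcal L_2$ and $\mathcal R_1\sqsubseteq\mathcal R_2$. A bimachine $\mathcal B$ realizing $f$ is minimal if there is no bimachine $\mathcal B'$ realizing $f$ with $\mathcal B\sqsubseteq\mathcal B'$ and $\mathcal B'\not\sqsubseteq\mathcal B$. Left minimization: for $\mathcal B$ with right automaton $\mathcal R$ realizing $f$, let $\widehat f_{[w]_{\mathcal R}}(u)=\bigwedge\{f(uv)\mid v\sim_{\mathcal R}w,\,uv\in\mathrm{dom}(f)\}$ and $u\sim_Lv$ iff for all $w$, $uw\in\mathrm{dom}f\Leftrightarrow vw\in\mathrm{dom}f$ and, if $uw\in\mathrm{dom}f$, $\widehat f_{[w]_{\mathcal R}}(u)^{-1}f(uw)=\widehat f_{[w]_{\mathcal R}}(v)^{-1}f(vw)$. $\mathit{Left}_f(\mathcal R)$ is the deterministic automaton on $\Sigma^*/{\sim_L}$ with transitions $([u],\sigma,[u\sigma])$, initial $[\varepsilon]$, finals $\{[u]\mid u\in\mathrm{dom}f\}$. $\mathit{Left}_f(\mathcal B)$ is the bimachine $(\mathit{Left}_f(\mathcal R),\mathcal R,\omega',\lambda',\rho')$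 with $\omega'([u]_L,\sigma,[w]_{\mathcal R})=\widehat f_{[\sigma w]_{\mathcal R}}(u)^{-1}\widehat f_{[w]_{\mathcal R}}(u\sigma)$, $\lambda'([w]_{\mathcal R})=\widehat f_{[w]_{\mathcal R}}(\varepsilon)$, $\rho'([u]_L)=\widehat f_{[\varepsilon]_{\mathcal R}}(u)^{-1}f(u)$; it realizes $f$. $\mathit{Right}_f(\mathcal B)$ (with left automaton that of $\mathcal B$ and right automaton $\mathit{Right}_f(\mathcal L)$) is defined symmetrically, by applying the mirror of this construction (to $w\mapsto\overline{f(\overline w)}$, $\overline{x}$ the mirror image of $x$, and the mirrored bimachine, then mirroring back). *)

(* Defs.v *)
From Stdlib Require Import ClassicalEpsilon.
From mathcomp Require Import all_boot.
Set Implicit Arguments. Unset Strict Implicit. Unset Printing Implicit Defensive.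

Section Bimachines.
Variable S : finType.

Definition word := seq S.
Definition transduction := word -> option word.

(* u^{-1} v : the word v' with u v' = v (used only when u is a prefix of v) *)
Definition lquot (u v : word) : word := drop (size u) v.

(* longest common prefix of a (possibly infinite) set of words; /\ empty = eps *)
Definition is_lcp (P : word -> Prop) (x : word) : Prop :=
  (forall y, P y -> prefix x y) /\
  (forall z, (forall y, P y -> prefix z y) -> prefix z x).

Definition lcp (P : word -> Prop) : word :=
  if excluded_middle_informative (exists y, P y)
  then epsilon (inhabits ([::] : word)) (is_lcp P)
  else [::].

Record lauto (Q : finType) := LAuto {
  l_init : Q; l_delta : Q -> S -> Q; l_final : pred Q }.

Definition lstate (Q : finType) (A : lauto Q) (u : word) : Q :=
  foldl (l_delta A) (l_init A) u.
Definition lequiv (Q : finType) (A : lauto Q) (u v : word) : Prop :=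
  lstate A u = lstate A v.

(* Right automaton: backward deterministic and backward complete, so its
   transitions are given by a predecessor function: r_delta s q is the unique
   p with a transition (p, s, q).  [u]_R is the unique p with a run on u from
   p to r0. *)
Record rauto (Q : finType) := RAuto {
  r_init : Q; r_delta : S -> Q -> Q; r_final : pred Q }.

Definition rstate (Q : finType) (A : rauto Q) (u : word) : Q :=
  foldr (r_delta A) (r_init A) u.
Definition requiv (Q : finType) (A : rauto Q) (u v : word) : Prop :=
  rstate A u = rstate A v.

Record bimachine (QL QR : finType) := Bimachine {
  bL : lauto QL;
  bR : rauto QR;
  b_omega : QL -> S -> QR -> word;
  b_lambda : QR -> word;   (* only relevant on final states of R *)
  b_rho : QL -> word }.    (* only relevant on final states of L *)

Section BM.
Variables (QL QR : finType) (B : bimachine QL QR).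

Definition bm_wf : Prop :=
  forall u, l_final (bL B) (lstate (bL B) u) = r_final (bR B) (rstate (bR B) u).

(* prod_{k} omega([prefix]_L, sigma_k, [suffix]_R), p = letters already read *)
Fixpoint bm_mid (p u : word) : word :=
  match u with
  | [::] => [::]
  | s :: w => b_omega B (lstate (bL B) p) s (rstate (bR B) w) ++ bm_mid (rcons p s) w
  end.

Definition bm_out (u : word) : word :=
  b_lambda B (rstate (bR B) u) ++ bm_mid [::] u ++ b_rho B (lstate (bL B) u).

Definition realizes (f : transduction) : Prop :=
  bm_wf /\
  forall u, f u = if l_final (bL B) (lstate (bL B) u) then Some (bm_out u) else None.
End BM.

Definition bm_le (QL1 QR1 QL2 QR2 : finType)
  (B1 : bimachine QL1 QR1) (B2 : bimachine QL2 QR2) : Prop :=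
  (forall u v, lequiv (bL B1) u v -> lequiv (bL B2) u v) /\
  (forall u v, requiv (bR B1) u v -> requiv (bR B2) u v).

Definition minimal (f : transduction) (QL QR : finType) (B : bimachine QL QR) : Prop :=
  ~ exists (QL' QR' : finType) (B' : bimachine QL' QR'),
      realizes B' f /\ bm_le B B' /\ ~ bm_le B' B.

Definition fhat (f : transduction) (QR : finType) (R : rauto QR) (w u : word) : word :=
  lcp (fun y => exists v, rstate R v = rstate R w /\ f (u ++ v) = Some y).

Definition leftEq (f : transduction) (QR : finType) (R : rauto QR) (u v : word) : Prop :=
  forall w,
    (f (u ++ w) <> None <-> f (v ++ w) <> None) /\
    (forall y1 y2, f (u ++ w) = Some y1 -> f (v ++ w) = Some y2 ->
        lquot (fhat f R w u) y1 = lquot (fhat f R w v) y2).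

(* B' is (a copy of) Left_f(B): its left automaton is Left_f(R) up to
   isomorphism of the reachable part (same word equivalence ~_L, same final
   classes), its right automaton is R, and omega', lambda', rho' are given by
   the formulas of the paper. *)
Definition IsLeftOf (f : transduction) (QL QR QL' : finType)
  (B : bimachine QL QR) (B' : bimachine QL' QR) : Prop :=
  let R := bR B in let L' := bL B' in
  [/\ bR B' = R,
      forall u v, lequiv L' u v <-> leftEq f R u v,
      forall u, l_final L' (lstate L' u) = (f u != None) &
  [/\       forall u s w, b_omega B' (lstate L' u) s (rstate R w)
                    = lquot (fhat f R (s :: w) u) (fhat f R w (rcons u s)),
      forall w, r_final R (rstate R w) -> b_lambda B' (rstate R w) = fhat f R w [::]
    & forall u y, f u = Some y -> b_rho B' (lstate L' u) = lquot (fhat f R [::] u) y]].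

Definition mirrorT (f : transduction) : transduction :=
  fun w => omap (@rev S) (f (rev w)).
Definition mirrorL (Q : finType) (A : lauto Q) : rauto Q :=
  RAuto (l_init A) (fun s q => l_delta A q s) (l_final A).
Definition mirrorR (Q : finType) (A : rauto Q) : lauto Q :=
  LAuto (r_init A) (fun q s => r_delta A s q) (r_final A).
Definition mirrorB (QL QR : finType) (B : bimachine QL QR) : bimachine QR QL :=
  Bimachine (mirrorR (bR B)) (mirrorL (bL B))
    (fun p s q => rev (b_omega B q s p))
    (fun q => rev (b_rho B q)) (fun p => rev (b_lambda B p)).

(* B' is (a copy of) Right_f(B): mirror of Left applied to mirrors *)
Definition IsRightOf (f : transduction) (QL QR QR' : finType)
  (B : bimachine QL QR) (B' : bimachine QL QR') : Prop :=
  IsLeftOf (mirrorT f) (mirrorB B) (mirrorB B').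

End Bimachines.

(* Main.v *)
Require Import Defs.
From Stdlib Require Import ClassicalEpsilon Classical FunctionalExtensionality.
From mathcomp Require Import all_boot.
Set Implicit Arguments. Unset Strict Implicit. Unset Printing Implicit Defensive.

Section Lcp.
Variable S : finType.
Implicit Types (P : word S -> Prop) (x y z a : word S).

Lemma prefix_antisym x y : prefix x y -> prefix y x -> x = y.
Proof.
move=> /prefixP[s1 ->] /prefixP[s2] /(congr1 size); rewrite !size_cat -addnA.
move=> /eqP; rewrite -{1}[size x]addn0 eqn_add2l eq_sym addn_eq0 size_eq0 => /andP[/eqP-> _].
by rewrite cats0.
Qed.

Lemma prefix_cat_lquot a y : prefix a y -> a ++ lquot a y = y.
Proof. by move=> /prefixP[s ->]; rewrite /lquot drop_size_cat. Qed.

Lemma lquot_cat a y : lquot a (a ++ y) = y.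
Proof. by rewrite /lquot drop_size_cat. Qed.

Lemma exists_max (Q : nat -> Prop) n : Q 0 ->
  exists k, k <= n /\ Q k /\ forall j, j <= n -> Q j -> j <= k.
Proof.
move=> Q0; elim: n => [|n [k [kn [Qk Hk]]]].
  by exists 0; split=> // j; rewrite leqn0 => /eqP->.
case: (classic (Q n.+1)) => H.
  by exists n.+1; split=> //.
exists k; split; first by apply: leqW.
split=> // j; rewrite leq_eqVlt => /orP[/eqP-> //|]; rewrite ltnS; exact: Hk.
Qed.

Lemma prefix_take_eq z y : prefix z y -> take (size z) y = z.
Proof. by rewrite prefixE => /eqP. Qed.

Lemma is_lcp_ex P : (exists y, P y) -> exists x, is_lcp P x.
Proof.
move=> [y0 Py0].
have [k [kn [Qk Hk]]] := @exists_max (fun k => forall y, P y -> prefix (take k y0) y)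
   (size y0) (fun y _ => ltac:(rewrite take0; exact: prefix0s)).
exists (take k y0); split=> // z Hz.
have zy0 := Hz _ Py0.
have sz := size_prefix zy0.
have ez := prefix_take_eq zy0.
have Qz : forall y, P y -> prefix (take (size z) y0) y by move=> y Py; rewrite ez; exact: Hz.
have := Hk _ sz Qz => szk.
by rewrite -ez -(take_takel _ szk); exact: prefix_take.
Qed.

Lemma is_lcp_uniq P x y : is_lcp P x -> is_lcp P y -> x = y.
Proof.
move=> [H1 H2] [H3 H4]; apply: prefix_antisym; [exact: H4 | exact: H2].
Qed.

Lemma lcp_spec P : (exists y, P y) -> is_lcp P (lcp P).
Proof.
move=> ne; rewrite /lcp; destruct (excluded_middle_informative (exists y, P y)) as [h|h]; last by [].
by apply: epsilon_spec; apply: is_lcp_ex.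
Qed.

Lemma lcp_none P : ~ (exists y, P y) -> lcp P = [::].
Proof. by move=> ne; rewrite /lcp; destruct (excluded_middle_informative (exists y, P y)). Qed.

Lemma lcp_prefix P y : P y -> prefix (lcp P) y.
Proof. by move=> Py; case: (lcp_spec (ex_intro _ y Py)) => H _; apply: H. Qed.

Lemma lcp_mono P1 P2 : (exists y, P1 y) -> (forall y, P1 y -> P2 y) ->
  prefix (lcp P2) (lcp P1).
Proof.
move=> [y Py] sub; case: (lcp_spec (ex_intro _ y Py)) => _ H; apply: H => z Pz.
exact: lcp_prefix (sub _ Pz).
Qed.

Definition img (F : word S -> option (word S)) (D : word S -> Prop) :=
  fun y => exists x, D x /\ F x = Some y.

Lemma lcp_shift F G (D : word S -> Prop) a :
  (exists x, D x /\ F x <> None) ->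
  (forall x, D x -> F x = omap (cat a) (G x)) ->
  lcp (img F D) = a ++ lcp (img G D).
Proof.
move=> [x0 [Dx0 Fx0]] HFG.
case E: (G x0) => [g0|]; last by move: Fx0; rewrite HFG // E.
have neG : exists y, img G D y by exists g0, x0.
have neF : exists y, img F D y by exists (a ++ g0), x0; rewrite HFG // E.
apply: is_lcp_uniq (lcp_spec neF) _.
case: (lcp_spec neG) => HG1 HG2; split.
  move=> y [x [Dx Fx]]; move: Fx; rewrite HFG //.
  case Gx: (G x) => [g|] //= [<-]; rewrite prefix_catr // eqxx /=; apply: HG1; by exists x.
move=> z Hz.
have zg0 : prefix z (a ++ g0) by apply: Hz; exists x0; rewrite HFG // E.
case: (leqP (size z) (size a)) => hs.
  apply: prefix_catl; move: zg0; rewrite !prefixE take_cat.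
  by rewrite leq_eqVlt in hs; case/orP: hs => [/eqP ->|->]; rewrite ?ltnn ?subnn ?take0 ?cats0 ?take_size.
move: zg0 => /prefixP[t zt].
have [z' ez'] : exists z', z = a ++ z'.
  exists (drop (size a) z); apply/esym/prefix_cat_lquot.
  have : take (size a) (z ++ t) = a by rewrite -zt take_size_cat.
  by rewrite take_cat hs prefixE => ->.
rewrite ez' prefix_catr // eqxx /=; apply: HG2 => y [x [Dx Gx]].
have : prefix z (a ++ y) by apply: Hz; exists x; rewrite HFG // Gx.
by rewrite ez' prefix_catr // eqxx.
Qed.
End Lcp.

Section Transfer.
Variable S : finType.
Implicit Types (x y z a b : word S).

Lemma lquot_catl a c y : lquot (a ++ c) y = lquot c (lquot a y).
Proof. by rewrite /lquot drop_drop size_cat addnC. Qed.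

Lemma transfer a b (F1 F2 : word S -> option (word S)) (D : word S -> Prop) w :
  D w ->
  (forall x, D x -> (F1 x <> None <-> F2 x <> None)) ->
  (forall x y, D x -> F1 x = Some y -> prefix a y) ->
  (forall x y, D x -> F2 x = Some y -> prefix b y) ->
  (forall x y1 y2, D x -> F1 x = Some y1 -> F2 x = Some y2 -> lquot a y1 = lquot b y2) ->
  forall y1 y2, F1 w = Some y1 -> F2 w = Some y2 ->
  lquot (lcp (img F1 D)) y1 = lquot (lcp (img F2 D)) y2.
Proof.
move=> Dw Hdom Ha Hb Hq y1 y2 F1w F2w.
pose G x := omap (lquot a) (F1 x).
have H1 : forall x, D x -> F1 x = omap (cat a) (G x).
  move=> x Dx; rewrite /G; case E: (F1 x) => [y|] //=.
  by rewrite prefix_cat_lquot // (Ha _ _ Dx E).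
have H2 : forall x, D x -> F2 x = omap (cat b) (G x).
  move=> x Dx; rewrite /G; case E: (F1 x) => [y|] /=; case E2: (F2 x) => [y'|] //=.
  - by rewrite (Hq _ _ _ Dx E E2) prefix_cat_lquot // (Hb _ _ Dx E2).
  - by exfalso; have := (proj1 (Hdom _ Dx)); rewrite E E2; apply.
  - by exfalso; have := (proj2 (Hdom _ Dx)); rewrite E E2; apply.
rewrite (@lcp_shift _ F1 G D a); last first.
  - exact: H1.
  - by exists w; rewrite F1w.
rewrite (@lcp_shift _ F2 G D b); last first.
  - exact: H2.
  - by exists w; rewrite F2w.
by rewrite !lquot_catl (Hq _ _ _ Dw F1w F2w).
Qed.
End Transfer.

Section BMfacts.
Variables (S : finType) (QL QR : finType) (B : bimachine S QL QR).
Local Notation L := (bL B).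
Local Notation R := (bR B).

Fixpoint mid2 (ql : QL) (u : word S) (qr : QR) : word S :=
  match u with
  | [::] => [::]
  | s :: u' => b_omega B ql s (foldr (r_delta R) qr u') ++ mid2 (l_delta L ql s) u' qr
  end.

Lemma bm_mid_mid2 p u : bm_mid B p u = mid2 (lstate L p) u (r_init R).
Proof.
elim: u p => [|s u IH] p //=.
by rewrite IH /lstate foldl_rcons.
Qed.

Lemma mid2_cat ql u w qr :
  mid2 ql (u ++ w) qr = mid2 ql u (foldr (r_delta R) qr w) ++ mid2 (foldl (l_delta L) ql u) w qr.
Proof.
elim: u ql => [|s u IH] ql //=.
by rewrite IH foldr_cat catA.
Qed.

Lemma mid2_rcons ql u s qr :
  mid2 ql (rcons u s) qr = mid2 ql u (r_delta R s qr) ++ b_omega B (foldl (l_delta L) ql u) s qr.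
Proof.
elim: u ql => [|s' u IH] ql /=; first by rewrite cats0.
by rewrite IH foldr_rcons catA.
Qed.

Definition Pfx (u : word S) (q : QR) : word S :=
  b_lambda B (foldr (r_delta R) q u) ++ mid2 (l_init L) u q.
Definition Sfx (q : QL) (w : word S) : word S :=
  mid2 q w (r_init R) ++ b_rho B (foldl (l_delta L) q w).

Lemma out_split f u w : realizes B f ->
  f (u ++ w) = if l_final L (foldl (l_delta L) (lstate L u) w)
               then Some (Pfx u (rstate R w) ++ Sfx (lstate L u) w) else None.
Proof.
move=> [_ Hf]; rewrite Hf /bm_out /lstate foldl_cat.
case: ifP => // _; congr Some.
rewrite /Pfx /Sfx bm_mid_mid2 mid2_cat /rstate foldr_cat /lstate /=.
by rewrite !catA.
Qed.

Lemma fhatE f (R' : rauto S QR) w u :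
  fhat f R' w u = lcp (img (fun v => f (u ++ v)) (fun v => rstate R' v = rstate R' w)).
Proof. by []. Qed.

Lemma refine f u u' : realizes B f -> lstate L u = lstate L u' -> leftEq f R u u'.
Proof.
move=> Hr Heq w; split.
  by rewrite !(out_split _ _ Hr) Heq; case: ifP.
move=> y1 y2 E1 E2; rewrite !fhatE.
apply: (@transfer _ (Pfx u (rstate R w)) (Pfx u' (rstate R w))) E1 E2 => //.
- by move=> x _ /=; rewrite !(out_split _ _ Hr) Heq; case: ifP.
- move=> x y Dx /=; rewrite (out_split _ _ Hr) Dx; case: ifP => // _ [<-]; exact: prefix_prefix.
- move=> x y Dx /=; rewrite (out_split _ _ Hr) Dx; case: ifP => // _ [<-]; exact: prefix_prefix.
- move=> x y1' y2' Dx /=; rewrite !(out_split _ _ Hr) Dx Heq; case: ifP => // _ [<-] [<-].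
  by rewrite !lquot_cat.
Qed.
End BMfacts.

Section LeftEqFacts.
Variables (S : finType) (QR : finType) (f : transduction S) (R : rauto S QR).
Implicit Types (u v w x : word S).

Lemma fhat_rs (Q : finType) (R' : rauto S Q) w w' u :
  rstate R' w = rstate R' w' -> fhat f R' w u = fhat f R' w' u.
Proof. by rewrite /fhat => ->. Qed.

Lemma rstate_cons (Q : finType) (R' : rauto S Q) s x :
  rstate R' (s :: x) = r_delta R' s (rstate R' x).
Proof. by []. Qed.

Lemma fhat_prefix (Q : finType) (R' : rauto S Q) w u x y :
  rstate R' x = rstate R' w -> f (u ++ x) = Some y -> prefix (fhat f R' w u) y.
Proof. by move=> Dx E; apply: lcp_prefix; exists x. Qed.

Lemma leftEq_refl u : leftEq f R u u.
Proof. by move=> w; split=> // y1 y2 -> [->]. Qed.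

Lemma leftEq_sym u v : leftEq f R u v -> leftEq f R v u.
Proof.
move=> H w; have [H1 H2] := H w; split; first by split; apply H1.
by move=> y1 y2 E1 E2; rewrite (H2 _ _ E2 E1).
Qed.

Lemma leftEq_trans u v x : leftEq f R u v -> leftEq f R v x -> leftEq f R u x.
Proof.
move=> H H' w; have [H1 H2] := H w; have [H1' H2'] := H' w; split.
  by split=> h; [apply/H1'; apply/H1 | apply/H1; apply/H1'].
move=> y1 y3 E1 E3.
case E2: (f (v ++ w)) => [y2|]; last by exfalso; apply: (proj1 H1); rewrite ?E1 ?E2.
by rewrite (H2 _ _ E1 E2) (H2' _ _ E2 E3).
Qed.

Lemma leftEq_antitone (Q : finType) (R' : rauto S Q) u v :
  (forall x y, rstate R x = rstate R y -> rstate R' x = rstate R' y) ->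
  leftEq f R' u v -> leftEq f R u v.
Proof.
move=> sub H w; have [H1 _] := H w; split => // y1 y2 E1 E2.
rewrite !fhatE.
apply: (@transfer _ (fhat f R' w u) (fhat f R' w v)) E1 E2 => //.
- by move=> x _; apply: (proj1 (H x)).
- by move=> x y Dx /= E; apply: fhat_prefix E; apply: sub.
- by move=> x y Dx /= E; apply: fhat_prefix E; apply: sub.
- move=> x y1' y2' Dx /= E1' E2'.
  by rewrite -!(@fhat_rs _ R' x w) ?(sub _ _ Dx) //; apply: (proj2 (H x)).
Qed.

Lemma leftEq_rcons u v s : leftEq f R u v -> leftEq f R (rcons u s) (rcons v s).
Proof.
move=> H w; rewrite !cat_rcons; have [H1 _] := H (s :: w); split => // y1 y2 E1 E2.
rewrite !fhatE.
apply: (@transfer _ (fhat f R (s :: w) u) (fhat f R (s :: w) v)) => //;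
  rewrite ?cat_rcons //.
- by move=> x _ /=; rewrite !cat_rcons; apply: (proj1 (H (s :: x))).
- move=> x y Dx /=; rewrite cat_rcons => E; apply: fhat_prefix E.
  by rewrite !rstate_cons Dx.
- move=> x y Dx /=; rewrite cat_rcons => E; apply: fhat_prefix E.
  by rewrite !rstate_cons Dx.
- move=> x y1' y2' Dx /=; rewrite !cat_rcons => E1' E2'.
  rewrite -!(@fhat_rs _ R (s :: x) (s :: w)) ?rstate_cons ?Dx //.
  by apply: (proj2 (H (s :: x))).
Qed.
End LeftEqFacts.

Definition pb (P : Prop) : bool := if excluded_middle_informative P then true else false.
Lemma pbP (P : Prop) : pb P = true <-> P.
Proof. by rewrite /pb; case: excluded_middle_informative. Qed.

Section LeftConstr.
Variables (S : finType) (QL QR : finType) (f : transduction S) (B : bimachine S QL QR).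
Hypothesis Hr : realizes B f.
Local Notation R := (bR B).
Local Notation LE := (leftEq f R).

Definition cls (u : word S) : {set QL} :=
  [set q | pb (exists v, lstate (bL B) v = q /\ LE u v)].

Lemma cls_eq u v : cls u = cls v <-> LE u v.
Proof.
split.
  move=> E.
  have : lstate (bL B) u \in cls u by rewrite inE; apply/pbP; exists u; split=> //; exact: leftEq_refl.
  rewrite E inE => /pbP [x [ex Hx]].
  apply: leftEq_trans (leftEq_sym Hx).
  by apply: refine Hr _.
move=> H; apply/setP => q; rewrite !inE.
case E1: (pb _); case E2: (pb _) => //.
- move/pbP: E1 => [x [ex Hx]]; have: pb (exists v0, lstate (bL B) v0 = q /\ LE v v0).
    by apply/pbP; exists x; split=> //; apply: leftEq_trans (leftEq_sym H) Hx.
  by rewrite E2.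
- move/pbP: E2 => [x [ex Hx]]; have: pb (exists v0, lstate (bL B) v0 = q /\ LE u v0).
    by apply/pbP; exists x; split=> //; apply: leftEq_trans H Hx.
  by rewrite E1.
Qed.

Definition rep (X : {set QL}) : word S := epsilon (inhabits [::]) (fun u => cls u = X).
Lemma rep_cls u : LE u (rep (cls u)).
Proof.
apply/cls_eq; symmetry; apply: (epsilon_spec (inhabits [::]) (fun v => cls v = cls u)).
by exists u.
Qed.

Definition repR (q : QR) : word S := epsilon (inhabits [::]) (fun w => rstate R w = q).
Lemma repR_spec w : rstate R (repR (rstate R w)) = rstate R w.
Proof. by apply: (epsilon_spec (inhabits [::]) (fun v => rstate R v = rstate R w)); exists w. Qed.

Definition LA : lauto S {set QL} :=
  LAuto (cls [::]) (fun X s => cls (rcons (rep X) s)) (fun X => f (rep X) != None).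

Lemma lstate_LA u : lstate LA u = cls u.
Proof.
elim/last_ind: u => [|u s IH] //.
rewrite /lstate foldl_rcons -/(lstate LA u) IH /=.
apply/cls_eq; apply: leftEq_rcons; apply: leftEq_sym; exact: rep_cls.
Qed.

Lemma lquot_nil a : lquot a ([::] : word S) = [::].
Proof. by rewrite /lquot drop_oversize. Qed.

Lemma omega_wd u u' s w : LE u u' ->
  lquot (fhat f R (s :: w) u) (fhat f R w (rcons u s)) =
  lquot (fhat f R (s :: w) u') (fhat f R w (rcons u' s)).
Proof.
move=> H.
set a := fhat f R (s :: w) u; set b := fhat f R (s :: w) u'.
set D := fun x => rstate R x = rstate R w.
case: (classic (exists x, D x /\ f (u ++ s :: x) <> None)) => [ex|nex]; last first.
  rewrite /fhat !lcp_none ?lquot_nil //.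
  - move=> [y [x [Dx E]]]; apply: nex; exists x; split=> //.
    by apply/(proj1 (H (s :: x))); rewrite -cat_rcons E.
  - by move=> [y [x [Dx E]]]; apply: nex; exists x; split=> //; rewrite -cat_rcons E.
pose G x := omap (lquot a) (f (u ++ s :: x)).
rewrite !fhatE (@lcp_shift _ (fun v => f (rcons u s ++ v)) G D a); last first.
  - move=> x Dx /=; rewrite cat_rcons /G; case E: (f _) => [y|] //=.
    rewrite prefix_cat_lquot //; apply: fhat_prefix E; by rewrite !rstate_cons Dx.
  - by case: ex => x [Dx E]; exists x; split=> //=; rewrite cat_rcons.
rewrite (@lcp_shift _ (fun v => f (rcons u' s ++ v)) G D b); last first.
  - move=> x Dx /=; rewrite cat_rcons /G; have [Hd Hq] := H (s :: x).
    case E: (f (u ++ s :: x)) => [y|] /=; case E2: (f (u' ++ s :: x)) => [y'|] //=.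
    + have -> : a = fhat f R (s :: x) u by rewrite /a; apply: fhat_rs; rewrite !rstate_cons Dx.
      have -> : b = fhat f R (s :: x) u' by rewrite /b; apply: fhat_rs; rewrite !rstate_cons Dx.
      rewrite (Hq _ _ E E2).
      rewrite prefix_cat_lquot //; apply: fhat_prefix E2; by [].
    + by exfalso; apply: (proj1 Hd); rewrite ?E ?E2.
    + by exfalso; apply: (proj2 Hd); rewrite ?E ?E2.
  - case: ex => x [Dx E]; exists x; split=> //=; rewrite cat_rcons.
    by apply/(proj1 (H (s :: x))).
by rewrite !lquot_cat.
Qed.

Definition BL : bimachine S {set QL} QR :=
  Bimachine LA R
    (fun X s q => lquot (fhat f R (s :: repR q) (rep X)) (fhat f R (repR q) (rcons (rep X) s)))
    (fun q => fhat f R (repR q) [::])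
    (fun X => lquot (fhat f R [::] (rep X)) (odflt [::] (f (rep X)))).

Lemma BL_isLeft : IsLeftOf f B BL.
Proof.
split=> //.
- by move=> u v; rewrite /lequiv /= !lstate_LA; apply: cls_eq.
- move=> u; rewrite /= lstate_LA; have [H _] := rep_cls u [::]; rewrite !cats0 in H.
  by case: (f u) H => [y|] [H1 H2] /=; case: (f (rep (cls u))) H1 H2 => [y'|] //= H1 H2;
     [exfalso; exact: H1 | exfalso; exact: H2].
split=> /=.
- move=> u s w; rewrite lstate_LA.
  have E1 : fhat f R (s :: repR (rstate R w)) (rep (cls u)) = fhat f R (s :: w) (rep (cls u)).
    by apply: fhat_rs; rewrite !rstate_cons repR_spec.
  have E2 : fhat f R (repR (rstate R w)) (rcons (rep (cls u)) s) = fhat f R w (rcons (rep (cls u)) s).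
    by apply: fhat_rs; rewrite repR_spec.
  rewrite E1 E2; apply: omega_wd; apply: leftEq_sym; exact: rep_cls.
- by move=> w _; apply: fhat_rs; rewrite repR_spec.
- move=> u y E; rewrite lstate_LA; have [H1 H2] := rep_cls u [::]; rewrite !cats0 in H1 H2.
  case E2: (f (rep (cls u))) => [y'|] /=; last by exfalso; apply: (proj1 H1); rewrite ?E ?E2.
  by rewrite (H2 _ _ E E2).
Qed.
End LeftConstr.

Section LeftReal.
Variables (S : finType) (QL QR QL' : finType) (f : transduction S)
  (B : bimachine S QL QR) (B' : bimachine S QL' QR).
Hypothesis HL : IsLeftOf f B B'.
Hypothesis Hr : realizes B f.

Lemma rfin u : r_final (bR B) (rstate (bR B) u) = (f u != None).
Proof.
case: Hr => Hwf Hf; rewrite -Hwf Hf; by case: ifP.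
Qed.

Lemma telescope p w y : f (p ++ w) = Some y ->
  fhat f (bR B) w p ++ bm_mid B' p w ++ lquot (fhat f (bR B) [::] (p ++ w)) y = y.
Proof.
case: HL => HR _ _ [Hom _ _].
elim: w p => [|s w IH] p E.
  rewrite cats0 in E *; rewrite /= prefix_cat_lquot //; apply: (fhat_prefix (x := [::])) => //.
  by rewrite cats0.
have E' : f (rcons p s ++ w) = Some y by rewrite cat_rcons.
have IH' := IH _ E'; rewrite cat_rcons in IH'.
rewrite /= HR Hom -catA catA.
rewrite prefix_cat_lquot ?IH' //.
rewrite fhatE fhatE; apply: lcp_mono.
  by exists y, w; split=> //.
move=> y' [x [Dx Ex]]; exists (s :: x); split; first by rewrite !rstate_cons Dx.
by rewrite -cat_rcons.
Qed.

Lemma left_realizes : realizes B' f.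
Proof.
case: HL => HR _ Hfin [_ Hlam Hrho].
split.
  by move=> u; rewrite HR Hfin rfin.
move=> u; rewrite Hfin; case E: (f u) => [y|] //=; congr Some.
rewrite /bm_out HR Hlam ?rfin ?E // (Hrho _ _ E).
by rewrite -{1}(telescope (p := [::]) E).
Qed.
End LeftReal.

Section Mirror.
Variable S : finType.

Lemma lstate_mirrorR (Q : finType) (R : rauto S Q) u : lstate (mirrorR R) u = rstate R (rev u).
Proof. by rewrite /lstate /rstate -{1}(revK u) foldl_rev. Qed.

Lemma rstate_mirrorL (Q : finType) (L : lauto S Q) u : rstate (mirrorL L) u = lstate L (rev u).
Proof. by rewrite /lstate /rstate foldl_rev. Qed.

Lemma mirrorTK (f : transduction S) : mirrorT (mirrorT f) = f.
Proof.
apply: functional_extensionality => w; rewrite /mirrorT revK.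
by case: (f w) => //= y; rewrite revK.
Qed.

Lemma mirrorBK (QL QR : finType) (B : bimachine S QL QR) : mirrorB (mirrorB B) = B.
Proof.
case: B => [[l0 ld lf] [r0 rd rf] om la rh]; rewrite /mirrorB /=.
congr Bimachine.
- by apply: functional_extensionality => p; apply: functional_extensionality => s;
     apply: functional_extensionality => q; rewrite revK.
- by apply: functional_extensionality => q; rewrite revK.
- by apply: functional_extensionality => q; rewrite revK.
Qed.

Lemma mid2_mirror (QL QR : finType) (B : bimachine S QL QR) qr u ql :
  mid2 (mirrorB B) qr u ql = rev (mid2 B ql (rev u) qr).
Proof.
elim: u qr => [|s u IH] qr //=.
rewrite IH rev_cons mid2_rcons rev_cat foldl_rev.
by [].
Qed.

Lemma mirror_realizes (QL QR : finType) (B : bimachine S QL QR) f :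
  realizes B f -> realizes (mirrorB B) (mirrorT f).
Proof.
move=> [Hwf Hf]; split.
  move=> u; rewrite /= lstate_mirrorR rstate_mirrorL /=; by rewrite Hwf.
move=> u; rewrite /mirrorT Hf /= lstate_mirrorR -Hwf.
case: ifP => // _ /=; congr Some.
rewrite /bm_out !bm_mid_mid2 /= lstate_mirrorR rstate_mirrorL mid2_mirror.
by rewrite lstate_mirrorR !rev_cat -!catA.
Qed.

Lemma mirror_realizes' (QL QR : finType) (B : bimachine S QL QR) f :
  realizes (mirrorB B) (mirrorT f) -> realizes B f.
Proof. by move/mirror_realizes; rewrite mirrorBK mirrorTK. Qed.

Lemma mirror_le (QL1 QR1 QL2 QR2 : finType) (B1 : bimachine S QL1 QR1) (B2 : bimachine S QL2 QR2) :
  bm_le B1 B2 -> bm_le (mirrorB B1) (mirrorB B2).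
Proof.
move=> [H1 H2]; split.
  move=> u v; rewrite /lequiv /= !lstate_mirrorR; exact: H2.
move=> u v; rewrite /requiv /= !rstate_mirrorL; exact: H1.
Qed.

Lemma mirror_le' (QL1 QR1 QL2 QR2 : finType) (B1 : bimachine S QL1 QR1) (B2 : bimachine S QL2 QR2) :
  bm_le (mirrorB B1) (mirrorB B2) -> bm_le B1 B2.
Proof. by move/mirror_le; rewrite !mirrorBK. Qed.

Lemma mirror_minimal (QL QR : finType) (B : bimachine S QL QR) f :
  minimal (mirrorT f) (mirrorB B) -> minimal f B.
Proof.
move=> Hm [QL' [QR' [B' [H1 [H2 H3]]]]]; apply: Hm.
exists QR', QL', (mirrorB B'); split; first exact: mirror_realizes.
split; first exact: mirror_le.
by move=> /mirror_le'.
Qed.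
End Mirror.

Section Main.
Variable S : finType.

Lemma left_exists (QL QR : finType) (B : bimachine S QL QR) f :
  realizes B f -> exists (QL' : finType) (B' : bimachine S QL' QR), IsLeftOf f B B'.
Proof. by move=> Hr; exists _, (BL f B); apply: BL_isLeft. Qed.

Lemma right_exists (QL QR : finType) (B : bimachine S QL QR) f :
  realizes B f -> exists (QR' : finType) (B' : bimachine S QL QR'), IsRightOf f B B'.
Proof.
move=> /mirror_realizes /left_exists [QL' [B'' H]].
by exists QL', (mirrorB B''); rewrite /IsRightOf mirrorBK.
Qed.

Lemma right_realizes (QL QR QR' : finType) (B : bimachine S QL QR) (B' : bimachine S QL QR') f :
  IsRightOf f B B' -> realizes B f -> realizes B' f.
Proof.
move=> H /mirror_realizes Hr; apply: mirror_realizes'; exact: left_realizes H Hr.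
Qed.

Lemma right_L (QL QR QR' : finType) (B : bimachine S QL QR) (B' : bimachine S QL QR') f :
  IsRightOf f B B' -> forall u, lstate (bL B') u = lstate (bL B) u.
Proof.
case=> /= HR _ _ _ u.
by rewrite -(revK u) -!rstate_mirrorL HR.
Qed.

Lemma left_le_L (QL QR QL' : finType) (B : bimachine S QL QR) (B' : bimachine S QL' QR) f :
  IsLeftOf f B B' -> realizes B f ->
  forall u v, lequiv (bL B) u v -> lequiv (bL B') u v.
Proof. by case=> _ Heq _ _ Hr u v H; apply/Heq; apply: refine Hr H. Qed.

Lemma right_le_R (QL QR QR' : finType) (B : bimachine S QL QR) (B' : bimachine S QL QR') f :
  IsRightOf f B B' -> realizes B f ->
  forall u v, requiv (bR B) u v -> requiv (bR B') u v.
Proof.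
move=> H /mirror_realizes Hr u v E.
have := left_le_L H Hr (u := rev u) (v := rev v).
rewrite /lequiv /requiv /= !lstate_mirrorR !revK; by apply.
Qed.

Lemma part1 (QL QR : finType) (B : bimachine S QL QR) f :
  realizes B f ->
  ((exists (QR1 QL2 : finType) (B1 : bimachine S QL QR1) (B2 : bimachine S QL2 QR1),
       IsRightOf f B B1 /\ IsLeftOf f B1 B2) /\
   (forall (QR1 QL2 : finType) (B1 : bimachine S QL QR1) (B2 : bimachine S QL2 QR1),
       IsRightOf f B B1 -> IsLeftOf f B1 B2 ->
       [/\ realizes B2 f, minimal f B2 & bm_le B B2])).
Proof.
move=> Hr; split.
  have [QR1 [B1 H1]] := right_exists Hr.
  have [QL2 [B2 H2]] := left_exists (right_realizes H1 Hr).
  by exists QR1, QL2, B1, B2.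
move=> QR1 QL2 B1 B2 HR1 HL2.
have r1 := right_realizes HR1 Hr.
have r2 := left_realizes HL2 r1.
have HR2 : bR B2 = bR B1 by case: HL2.
have leL : forall u v, lequiv (bL B) u v -> lequiv (bL B2) u v.
  move=> u v E; apply: (left_le_L HL2 r1); by rewrite /lequiv !(right_L HR1).
have leR : forall u v, requiv (bR B) u v -> requiv (bR B2) u v.
  move=> u v E; rewrite /requiv HR2; exact: (right_le_R HR1 Hr).
split; [exact: r2 | | by split].
move=> [QL' [QR' [B' [r' [[l1 l2] nle]]]]]; apply: nle; split.
  move=> u v E; case: HL2 => _ Heq _ _; apply/Heq.
  apply: (leftEq_antitone (R' := bR B')); last exact: refine r' E.
  by move=> x y; rewrite -HR2; apply: l2.
move=> u v E; rewrite /requiv HR2.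
case: HR1 => _ Heq1 _ _.
suff : lequiv (mirrorR (bR B1)) (rev u) (rev v).
  by rewrite /lequiv !lstate_mirrorR !revK.
apply/Heq1 => /=.
have mr' := mirror_realizes r'.
have s1 : leftEq (mirrorT f) (mirrorL (bL B')) (rev u) (rev v).
  apply: (refine mr'); rewrite /= !lstate_mirrorR !revK; exact: E.
have s2 : leftEq (mirrorT f) (mirrorL (bL B2)) (rev u) (rev v).
  apply: (leftEq_antitone (R' := mirrorL (bL B'))) s1.
  by move=> x y; rewrite !rstate_mirrorL; apply: l1.
apply: (leftEq_antitone (R' := mirrorL (bL B2))) s2.
by move=> x y; rewrite !rstate_mirrorL; apply: leL.
Qed.
End Main.

Theorem proposition3p5 (S : finType) (f : transduction S) (QL QR : finType)
  (B : bimachine S QL QR) :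
  realizes B f ->
  (* Left_f(Right_f(B)) *)
  ((exists (QR1 QL2 : finType) (B1 : bimachine S QL QR1) (B2 : bimachine S QL2 QR1),
       IsRightOf f B B1 /\ IsLeftOf f B1 B2) /\
   (forall (QR1 QL2 : finType) (B1 : bimachine S QL QR1) (B2 : bimachine S QL2 QR1),
       IsRightOf f B B1 -> IsLeftOf f B1 B2 ->
       [/\ realizes B2 f, minimal f B2 & bm_le B B2])) /\
  (* Right_f(Left_f(B)) *)
  ((exists (QL1 QR2 : finType) (B1 : bimachine S QL1 QR) (B2 : bimachine S QL1 QR2),
       IsLeftOf f B B1 /\ IsRightOf f B1 B2) /\
   (forall (QL1 QR2 : finType) (B1 : bimachine S QL1 QR) (B2 : bimachine S QL1 QR2),
       IsLeftOf f B B1 -> IsRightOf f B1 B2 ->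
       [/\ realizes B2 f, minimal f B2 & bm_le B B2])).
Proof.
move=> Hr; split; first exact: part1.
split.
  have [QL1 [B1 H1]] := left_exists Hr.
  have [QR2 [B2 H2]] := right_exists (left_realizes H1 Hr).
  by exists QL1, QR2, B1, B2.
move=> QL1 QR2 B1 B2 HL1 HR2.
have [_ P] := part1 (mirror_realizes Hr).
have H1' : IsRightOf (mirrorT f) (mirrorB B) (mirrorB B1).
  by rewrite /IsRightOf !mirrorBK mirrorTK.
have [r m l] := P _ _ _ (mirrorB B2) H1' HR2.
split; [exact: mirror_realizes' r | exact: mirror_minimal m | exact: mirror_le' l].
Qed.
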